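(* Let $r\ge 1$ and let $f:\{0,1\}^r\to\{0,1\}$ be any Boolean function. Then $f$ can be performed deterministically in non-adaptive measurement-based quantum computing (nMBQC) using at most $n=2^r-1$ parties; that is, for some $n\le 2^r-1$ there exist an $n\times r$ binary matrix $P$ with no all-zero row, an $n$-partite quantum state and, for each party, a pair of two-outcome measurements, such that for every $\mathbf{x}\in\{0,1\}^r$ the outcomes satisfy $\bigoplus_{j=1}^n m_j=f(\mathbf{x})$ with probability $1$.
   Context: nMBQC: $n$ non-communicating parties share a quantum state $\rho$ on $\mathcal{H}_1\otimes\cdots\otimes\mathcal{H}_n$. A classical control computer receives $\mathbf{x}\in\{0,1\}^r$ and, using only XOR (mod-2 addition) operations, computes $\mathbf{s}=(P\mathbf{x})\bmod 2$ for a fixed $n\times r$ binary matrix $P$ with no all-zero row, sending $s_j\in\{0,1\}$ to party $j$. Party $j$ performs one of two two-outcome measurements (POVMs $\{E^{(j)}_{0|s_j},E^{(j)}_{1|s_j}\}$) chosen by $s_j$, in a single round, obtaining $m_j\in\{0,1\}$ with joint probability $\mathrm{Tr}[\rho\bigotimes_j E^{(j)}_{m_j|s_j}]$. The control computer outputs $\bigoplus_j m_j$ (sum mod 2). A Boolean function $f$ is performed deterministically if for every $\mathbf{x}$ the output equals $f(\mathbf{x})$ with probability $1$. *)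

(* Defs.v *)
From HB Require Import structures.
From mathcomp Require Import all_boot all_order all_algebra.
From mathcomp Require Import complex.
From mathcomp Require Import Rstruct.
Set Implicit Arguments. Unset Strict Implicit. Unset Printing Implicit Defensive.
Import Order.TTheory GRing.Theory Num.Theory.
Local Open Scope ring_scope.

Definition C : numClosedFieldType := (Rdefinitions.R)[i].

(* Operators on a finite-dimensional Hilbert space with orthonormal basis
   indexed by a finite type T, given by their matrix entries A a b. *)
Definition op (T : finType) := T -> T -> C.

(* Positive semidefinite: <v, A v> >= 0 for all v (in a numClosedFieldType,
   [0 <= z] means z is real and nonnegative). *)
Definition psd (T : finType) (A : op T) : Prop :=
  forall v : T -> C, 0 <= \sum_(a : T) \sum_(b : T) (v a)^* * A a b * v b.

Definition density (T : finType) (rho : op T) : Prop :=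
  psd rho /\ \sum_(a : T) rho a a = 1.

Definition povm2 (T : finType) (E : bool -> op T) : Prop :=
  (forall m, psd (E m)) /\
  (forall a b : T, E false a b + E true a b = (a == b)%:R).

(* Basis index of the joint space H_1 (x) ... (x) H_n, dim H_j = d j. *)
Definition jidx (n : nat) (d : 'I_n -> nat) : finType :=
  {dffun forall j : 'I_n, 'I_(d j)}.

Definition tens (n : nat) (d : 'I_n -> nat) (E : forall j : 'I_n, op 'I_(d j))
  : op (jidx d) :=
  fun a b => \prod_(j < n) E j (a j) (b j).

Definition trmul (T : finType) (rho X : op T) : C :=
  \sum_(a : T) \sum_(b : T) rho a b * X b a.

Definition xorsum (k : nat) (b : 'I_k -> bool) : bool :=
  \big[addb/false]_(i < k) b i.

Definition ctrl (n r : nat) (P : 'I_n -> 'I_r -> bool) (x : 'I_r -> bool)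
  : 'I_n -> bool :=
  fun j => xorsum (fun k => P j k && x k).

Definition jprob (n : nat) (d : 'I_n -> nat) (rho : op (jidx d))
  (E : forall j : 'I_n, bool -> bool -> op 'I_(d j))
  (s m : 'I_n -> bool) : C :=
  trmul rho (tens (fun j => E j (s j) (m j))).

Definition performs_det (r n : nat) (f : ('I_r -> bool) -> bool)
  (P : 'I_n -> 'I_r -> bool) (d : 'I_n -> nat) (rho : op (jidx d))
  (E : forall j : 'I_n, bool -> bool -> op 'I_(d j)) : Prop :=
  forall x : {ffun 'I_r -> bool},
    \sum_(m : {ffun 'I_n -> bool} | xorsum m == f x)
       jprob rho E (ctrl P x) m = 1.

(* Main.v *)
Require Import Defs.
From HB Require Import structures.
From mathcomp Require Import all_boot all_order all_algebra.
From mathcomp Require Import ring complex Rstruct.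

Import Order.TTheory GRing.Theory Num.Theory.
Local Open Scope ring_scope.

Definition d2 n : 'I_n -> nat := fun _ => 2%N.
Definition all0 n : jidx (d2 n) := [ffun j => ord0].
Definition all1 n : jidx (d2 n) := [ffun j => ord_max].
Definition gv n (b0 : bool) (a : jidx (d2 n)) : C :=
  (a == all0 n)%:R + (-1) ^+ b0 * (a == all1 n)%:R.

Lemma all01 n : (0 < n)%N -> all0 n != all1 n.
Proof.
move=> hn; apply/eqP => /ffunP /(_ (Ordinal hn)).
by rewrite !ffunE.
Qed.

Lemma sum_gv n (hn : (0 < n)%N) b0 (F : jidx (d2 n) -> C) :
  \sum_b (gv n b0 b)^* * F b = F (all0 n) + (-1) ^+ b0 * F (all1 n).
Proof.
rewrite /gv.
rewrite (eq_bigr (fun b => (b == all0 n)%:R * F b + (-1) ^+ b0 * ((b == all1 n)%:R * F b))); last first.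
  by move=> b _; rewrite rmorphD rmorphM /= rmorph_sign !rmorph_nat mulrDl mulrA.
rewrite big_split /= -mulr_sumr.
have dl : forall c : jidx (d2 n), \sum_b (b == c)%:R * F b = F c.
  move=> c; rewrite (bigD1 c) //= eqxx mul1r big1 ?addr0 // => b /negbTE ->.
  by rewrite mul0r.
by rewrite !dl.
Qed.

Lemma sign_xorsum (R : comRingType) (k : nat) (b : 'I_k -> bool) :
  (-1) ^+ (xorsum b) = \prod_i ((-1) ^+ (b i) : R).
Proof.
rewrite /xorsum; apply: (big_morph (fun c : bool => (-1) ^+ c : R)).
- by move=> x y; rewrite signr_addb.
- by [].
Qed.

Definition uvec (w : C) (m : bool) : 'I_2 -> C :=
  fun p => if (p : nat) == 0%N then 1 else (-1) ^+ m * w.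

Definition EG n (z : 'I_n -> bool -> C) : forall j : 'I_n, bool -> bool -> op 'I_(d2 n j) :=
  fun j s m p q => 2^-1 * uvec (z j s) m p * (uvec (z j s) m q)^*.

Definition rhoG n b0 : op (jidx (d2 n)) := fun a b => 2^-1 * gv n b0 a * (gv n b0 b)^*.

Lemma jprobG n (hn : (0 < n)%N) (z : 'I_n -> bool -> C) b0 (s m : 'I_n -> bool) :
  jprob (rhoG n b0) (EG n z) s m =
  (2^-1) ^+ n.+1 * (1 + (-1) ^+ b0 * ((-1) ^+ xorsum m * \prod_j z j (s j)))^*
    * (1 + (-1) ^+ b0 * ((-1) ^+ xorsum m * \prod_j z j (s j))).
Proof.
set U := fun c : jidx (d2 n) => \prod_j uvec (z j (s j)) (m j) (c j).
have ht : forall a b, tens (fun j => EG n z j (s j) (m j)) b a = (2^-1) ^+ n * U b * (U a)^*.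
  move=> a b; rewrite /tens /EG /U big_split big_split /= prodr_const card_ord.
  by rewrite rmorph_prod.
rewrite /jprob /trmul.
set V := \sum_b (gv n b0 b)^* * U b.
have -> : \sum_a \sum_b rhoG n b0 a b * tens (fun j => EG n z j (s j) (m j)) b a
   = (2^-1) ^+ n.+1 * V^* * V.
  rewrite /V rmorph_sum -mulrA mulr_suml mulr_sumr; apply: eq_bigr => a _.
  rewrite mulrA mulr_sumr; apply: eq_bigr => b _.
  rewrite ht /rhoG rmorphM /= conjCK exprS; ring.
have hV : V = 1 + (-1) ^+ b0 * ((-1) ^+ xorsum m * \prod_j z j (s j)).
  rewrite /V sum_gv // /U; congr (_ + _ * _).
    by rewrite big1 // => j _; rewrite ffunE.
  rewrite (eq_bigr (fun j => (-1) ^+ m j * z j (s j))); last first.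
    by move=> j _; rewrite ffunE.
  by rewrite big_split /= sign_xorsum.
by rewrite hV.
Qed.

Lemma sum_ffun_prod (R : comRingType) (I : finType) (F : I -> bool -> R) :
  \prod_i (F i false + F i true) = \sum_(m : {ffun I -> bool}) \prod_i F i (m i).
Proof.
rewrite (eq_bigr (fun i => \sum_(j : bool) F i j)); last by move=> i _; rewrite big_bool addrC.
by rewrite bigA_distr_bigA.
Qed.

Lemma sumG n (hn : (0 < n)%N) (z : 'I_n -> bool -> C) (b0 : bool) (s : 'I_n -> bool) (c : bool) :
  (-1) ^+ b0 * \prod_j z j (s j) = (-1) ^+ c ->
  \sum_(m : {ffun 'I_n -> bool} | xorsum m == c) jprob (rhoG n b0) (EG n z) s m = 1.
Proof.
move=> hW.
have hj : forall m : {ffun 'I_n -> bool}, jprob (rhoG n b0) (EG n z) s m =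
   (2^-1) ^+ n * (1 + (-1) ^+ c * \prod_j (-1) ^+ m j).
  move=> m; rewrite jprobG // mulrCA hW -sign_xorsum -signr_addb.
  rewrite rmorphD rmorph1 rmorph_sign exprS.
  have h2 : forall t : bool, (1 + (-1) ^+ t : C) * (1 + (-1) ^+ t) = 2 * (1 + (-1) ^+ t).
    by case => /=; rewrite ?expr0 ?expr1 ?subrr ?mulr0 // -mulr2n mulr_natl.
  rewrite -mulrA h2 -mulrA [2^-1 ^+ n * _]mulrCA mulrA -mulrA mulKf ?pnatr_eq0 //.
  by rewrite addbC signr_addb.
rewrite big_mkcond /=.
rewrite (eq_bigr (fun m : {ffun 'I_n -> bool} => jprob (rhoG n b0) (EG n z) s m)); last first.
  move=> m _; case: eqP => // /eqP hne; rewrite hj -sign_xorsum -signr_addb.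
  by case: (c) (xorsum m) hne => [] [] //= _; rewrite expr1 subrr mulr0.
rewrite (eq_bigr (fun m : {ffun 'I_n -> bool} => (2^-1) ^+ n + (2^-1) ^+ n * (-1) ^+ c * \prod_j (-1) ^+ m j)); last first.
  by move=> m _; rewrite hj mulrDr mulr1 mulrA.
rewrite big_split /= -mulr_sumr -(@sum_ffun_prod _ _ (fun j b => (-1) ^+ b)) /=.
rewrite expr0 expr1 subrr prodr_const card_ord expr0n.
rewrite eqn0Ngt hn /= mulr0 addr0 sumr_const card_ffun card_bool card_ord.
transitivity ((2^-1 : C) ^+ n * ((2 ^ n)%N)%:R); first by rewrite mulr_natr.
by rewrite natrX -exprMn mulVf ?expr1n // pnatr_eq0.
Qed.
Lemma psd_rank1 (T : finType) (c : C) (u : T -> C) :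
  0 <= c -> psd (fun a b => c * u a * (u b)^*).
Proof.
move=> c0 v.
set W := \sum_b (u b)^* * v b.
have -> : \sum_a \sum_b (v a)^* * (c * u a * (u b)^*) * v b = c * (W^* * W).
  rewrite /W rmorph_sum mulr_suml mulr_sumr; apply: eq_bigr => a _.
  rewrite mulr_sumr mulr_sumr; apply: eq_bigr => b _.
  rewrite rmorphM /= conjCK.
  move: (v a) (u a) (u b) (v b) => x y z w.
  ring.
by apply: mulr_ge0 => //; rewrite mulrC mul_conjC_ge0.
Qed.

Lemma half_ge0 : 0 <= (2^-1 : C).
Proof. by rewrite invr_ge0 ler0n. Qed.

Lemma I2cases (p : 'I_2) : p = ord0 \/ p = ord_max.
Proof. by case: p => [[|[|k]] hk]; [left|right|]; try apply: val_inj. Qed.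

Lemma uv0 (w : C) m : uvec w m ord0 = 1. Proof. by []. Qed.
Lemma uv1 (w : C) m : uvec w m ord_max = (-1) ^+ m * w. Proof. by []. Qed.

Lemma povm_calc (w : C) (hw : w * w^* = 1) (p q : 'I_2) :
  2^-1 * uvec w false p * (uvec w false q)^* + 2^-1 * uvec w true p * (uvec w true q)^*
  = (p == q)%:R.
Proof.
have h2 : (2^-1 : C) + 2^-1 = 1 by field.
case: (I2cases p) => ->; case: (I2cases q) => ->; rewrite ?uv0 ?uv1 ?eqxx.
- by rewrite conjC1 !mulr1.
- rewrite !rmorphM !rmorph_sign /= expr1 expr0 !mul1r mulN1r mulr1 mulrN addrN.
  by [].
- rewrite rmorph1 expr1 expr0 !mulr1 mul1r mulN1r mulrN addrN.
  by have -> : (ord_max == ord0 :> 'I_2) = false by [].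
- rewrite !rmorphM !rmorph_sign /= !expr1 !expr0 !mul1r.
  have -> : 2^-1 * w * w^* + 2^-1 * (-1 * w) * (-1 * w^*) = (2^-1 + 2^-1) * (w * w^*) by ring.
  by rewrite h2 hw mul1r.
Qed.

Lemma povmG n (z : 'I_n -> bool -> C) :
  (forall j s, z j s * (z j s)^* = 1) -> forall j s, povm2 (EG n z j s).
Proof.
move=> hz j s; split.
  by move=> m; apply: psd_rank1; apply: half_ge0.
by move=> p q; rewrite /EG povm_calc.
Qed.

Lemma densityG n (hn : (0 < n)%N) (b0 : bool) : density (rhoG n b0).
Proof.
split; first by apply: psd_rank1; apply: half_ge0.
rewrite /rhoG (eq_bigr (fun a => 2^-1 * ((gv n b0 a)^* * gv n b0 a))); last first.
  by move=> a _; ring.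
rewrite -mulr_sumr sum_gv // /gv eqxx (negbTE (all01 n hn)) eq_sym (negbTE (all01 n hn)) eqxx.
have -> : true%:R + (-1) ^+ b0 * false%:R + (-1) ^+ b0 * (false%:R + (-1) ^+ b0 * true%:R)
   = 1 + (-1) ^+ b0 * (-1) ^+ b0 :> C by rewrite /= !mulr0 !addr0 add0r mulr1.
by rewrite -signr_addb addbb expr0; field.
Qed.


Definition om r : C := (2 ^ r.-1)%N.-root (-1).

Lemma om_pow r : (om r) ^+ (2 ^ r.-1)%N = -1.
Proof. by rewrite /om rootCK // expn_gt0. Qed.

Lemma om_norm r : `|om r| = 1.
Proof. by rewrite /om norm_rootC normrN normr1 rootC1 // expn_gt0. Qed.

Lemma om_neq0 r : om r != 0.
Proof. by rewrite -normr_eq0 om_norm oner_eq0. Qed.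

Lemma om_unit r (k : int) : om r ^ k * (om r ^ k)^* = 1.
Proof.
rewrite -normCK.
have -> : `|om r ^ k| = 1.
  case: k => k /=.
    by rewrite -(exprnP (om r) k) normrX om_norm expr1n.
  by rewrite NegzE -exprnN normfV normrX om_norm expr1n invr1.
by rewrite expr1n.
Qed.

Lemma prod_om r n (e : 'I_n -> int) : \prod_j om r ^ e j = om r ^ (\sum_j e j).
Proof.
apply: esym; apply: (big_morph (fun k : int => om r ^ k)).
  by move=> a b; rewrite expfzDr // om_neq0.
by rewrite expr0z.
Qed.

Set Implicit Arguments.
Definition bdot r (x S : 'I_r -> bool) : bool := xorsum (fun k => S k && x k).

Lemma orth r (x y : {ffun 'I_r -> bool}) :
  \sum_(S : {ffun 'I_r -> bool}) ((-1) ^+ bdot x S * (-1) ^+ bdot y S : int)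
  = if x == y then 2 ^+ r else 0.
Proof.
have -> : \sum_(S : {ffun 'I_r -> bool}) ((-1) ^+ bdot x S * (-1) ^+ bdot y S : int)
  = \sum_(S : {ffun 'I_r -> bool}) \prod_k ((-1) ^+ (S k && x k) * (-1) ^+ (S k && y k)).
  apply: eq_bigr => S _; rewrite /bdot !sign_xorsum -big_split //.
rewrite -(@sum_ffun_prod _ _ (fun k c => (-1) ^+ (c && x k) * (-1) ^+ (c && y k))) /=.
case: eqP => [<-|].
  rewrite (eq_bigr (fun _ => 2)) ?prodr_const ?card_ord //.
  by move=> k _; rewrite -signr_addb addbb.
move=> hne; have [k hk] : exists k, x k != y k.
  apply/existsP; apply: contra_notT hne => /existsPn h; apply/ffunP => k.
  exact/eqP/negPn/h.
rewrite (bigD1 k) //= -signr_addb.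
by case: (x k) (y k) hk => [] [] //= _; rewrite mul0r.
Qed.

Definition zf r : {ffun 'I_r -> bool} := [ffun => false].

Definition NN r (f : ('I_r -> bool) -> bool) (S : {ffun 'I_r -> bool}) : int :=
  \sum_(y : {ffun 'I_r -> bool}) (f y : nat)%:Z * (-1) ^+ bdot y S.

Lemma bdot0 r (S : 'I_r -> bool) : bdot (zf r) S = false.
Proof. by rewrite /bdot /xorsum big1 // => k _; rewrite ffunE andbF. Qed.

Lemma bdotS0 r (x : 'I_r -> bool) : bdot x (zf r) = false.
Proof. by rewrite /bdot /xorsum big1 // => k _; rewrite ffunE. Qed.

Lemma sum_delta (I : finType) (x : I) (F : I -> int) :
  \sum_(y : I) F y * (if x == y then 1 else 0) = F x.
Proof.
rewrite (bigD1 x) //= eqxx mulr1 big1 ?addr0 // => y hy.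
by rewrite eq_sym (negbTE hy) mulr0.
Qed.

Lemma fourier r (hr : (0 < r)%N) (f : ('I_r -> bool) -> bool) (x : {ffun 'I_r -> bool}) :
  \sum_(S : {ffun 'I_r -> bool}) (bdot x S : nat)%:Z * NN f S
  = 2 ^+ r.-1 * ((f (zf r) : nat)%:Z - (f x : nat)%:Z).
Proof.
apply: (@mulfI _ 2) => //.
have e2 : forall b : bool, 2 * (b : nat)%:Z = 1 - (-1) ^+ b by case.
rewrite mulr_sumr (eq_bigr (fun S : {ffun 'I_r -> bool} => NN f S - (-1) ^+ bdot x S * NN f S)); last first.
  by move=> S _; rewrite mulrA e2 mulrBl mul1r.
rewrite sumrB /NN.
have h1 : forall z : {ffun 'I_r -> bool}, \sum_(S : {ffun 'I_r -> bool}) (-1) ^+ bdot z S *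
      (\sum_(y : {ffun 'I_r -> bool}) (f y : nat)%:Z * (-1) ^+ bdot y S) = 2 ^+ r * (f z : nat)%:Z.
  move=> z.
  rewrite (eq_bigr (fun S : {ffun 'I_r -> bool} => \sum_(y : {ffun 'I_r -> bool}) (f y : nat)%:Z * ((-1) ^+ bdot z S * (-1) ^+ bdot y S))); last first.
    move=> S _; rewrite mulr_sumr; apply: eq_bigr => y _; ring.
  rewrite exchange_big /=.
  rewrite (eq_bigr (fun y : {ffun 'I_r -> bool} => (f y : nat)%:Z * (if z == y then 2 ^+ r else 0))); last first.
    by move=> y _; rewrite -mulr_sumr orth.
  rewrite (eq_bigr (fun y : {ffun 'I_r -> bool} => (2 ^+ r * (f y : nat)%:Z) * (if z == y then 1 else 0))).
    by rewrite sum_delta.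
  by move=> y _; case: eqP => _; rewrite ?mulr1 ?mulr0 // mulrC.
rewrite h1.
rewrite (eq_bigr (fun S : {ffun 'I_r -> bool} => (-1) ^+ bdot (zf r) S * \sum_(y : {ffun 'I_r -> bool}) (f y : nat)%:Z * (-1) ^+ bdot y S)); last first.
  by move=> S _; rewrite bdot0 mul1r.
rewrite h1.
have -> : (2 ^+ r : int) = 2 * 2 ^+ r.-1 by rewrite -exprS prednK.
ring.
Qed.

Unset Implicit Arguments.

Lemma sign_fix (b0 b1 : bool) :
  (-1 : C) ^+ b0 * (-1) ^ ((b1 : nat)%:Z - (b0 : nat)%:Z) = (-1) ^+ b1.
Proof.
case: b0; case: b1.
- by rewrite subrr expr0z mulr1.
- by rewrite sub0r exprN1 expr1 invrN1 mulrNN mulr1.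
- by rewrite subr0 expr0 mul1r.
- by rewrite subrr expr0z mulr1.
Qed.

Theorem theorem3p4p1 (r : nat) (hr : (1 <= r)%N) (f : ('I_r -> bool) -> bool) :
  exists (n : nat) (P : 'I_n -> 'I_r -> bool) (d : 'I_n -> nat)
         (rho : op (jidx d)) (E : forall j : 'I_n, bool -> bool -> op 'I_(d j)),
    [/\ (n <= 2 ^ r - 1)%N,
        (forall j : 'I_n, exists k : 'I_r, P j k),
        density rho,
        (forall (j : 'I_n) (s : bool), povm2 (E j s)) &
        performs_det f P rho E].
Proof.
pose A := [set~ zf r].
pose n := #|A|.
have hnA : n = (2 ^ r).-1 by rewrite /n cardsC1 card_ffun card_bool card_ord.
have hn : (0 < n)%N by rewrite hnA -subn1 subn_gt0 -{1}(expn0 2) ltn_exp2l // ltnNge; case: r hr.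
pose Sj := fun j : 'I_n => (enum_val j : {ffun 'I_r -> bool}).
pose P := fun (j : 'I_n) (k : 'I_r) => Sj j k.
pose z := fun (j : 'I_n) (s : bool) => om r ^ (- ((s : nat)%:Z * NN f (Sj j))).
exists n, P, (d2 n), (rhoG n (f (zf r))), (EG n z).
split.
- by rewrite hnA subn1.
- move=> j; have := enum_valP j; rewrite !inE => hne.
  apply/existsP; apply: contraR hne => /existsPn h; apply/eqP/ffunP => k.
  by rewrite ffunE; apply/negbTE/h.
- exact: densityG.
- by apply: povmG => j s; apply: om_unit.
move=> x; apply: sumG => //.
rewrite prod_om sumrN.
have -> : \sum_(i < n) (ctrl P x i : nat)%:Z * NN f (Sj i)
    = \sum_(S : {ffun 'I_r -> bool}) (bdot x S : nat)%:Z * NN f S.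
  symmetry; rewrite (bigD1 (zf r)) //= bdotS0 mul0r add0r.
  rewrite (eq_bigl (fun S => S \in A)); last by move=> S; rewrite !inE.
  by rewrite big_enum_val.
rewrite fourier; last by [].
rewrite -mulrN opprB -exprz_exp.
have -> : (2 ^+ r.-1 : int) = Posz (2 ^ r.-1)%N by rewrite -natz natrX.
rewrite -exprnP om_pow.
exact: sign_fix.
Qed.
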